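(* If $n > 1$ and $n \ne 5$, then there is some $n \times n$ panstochastic matrix that is not a convex combination of panstochastic permutation matrices.
   Context: An $n \times n$ matrix with nonnegative real entries is doubly stochastic if the sum of the entries along any of its rows or columns is equal to $1$. A doubly stochastic matrix is panstochastic if the sum of the entries along any downward diagonal or upward diagonal, either broken or unbroken, is equal to $1$ (indexing rows and columns by $\{0,1,\dots,n-1\}$, the $k$th upward diagonal consists of the entries $(i,j)$ with $i+j \equiv k \pmod n$, and the $k$th downward diagonal of the entries $(i,j)$ with $i-j \equiv k \pmod n$). A linear combination is convex if the coefficients are nonnegative and sum to $1$. *)

(* Defs.v *)
From mathcomp Require Import all_boot all_order all_fingroup all_algebra.
From mathcomp Require Import reals.
Set Implicit Arguments. Unset Strict Implicit. Unset Printing Implicit Defensive.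
Import Order.TTheory GRing.Theory Num.Theory.
Local Open Scope ring_scope.

Definition doubly_stochastic (R : realType) (n : nat) (A : 'M[R]_n) : Prop :=
  (forall i j, 0 <= A i j) /\
  (forall i : 'I_n, \sum_(j < n) A i j = 1) /\
  (forall j : 'I_n, \sum_(i < n) A i j = 1).

(* k-th upward diagonal: entries (i,j) with i + j = k (mod n);
   k-th downward diagonal: entries (i,j) with i - j = k (mod n),
   i.e. i = j + k (mod n). *)
Definition panstochastic (R : realType) (n : nat) (A : 'M[R]_n) : Prop :=
  doubly_stochastic A /\
  (forall k : 'I_n,
      \sum_(i < n) \sum_(j < n | (i + j == k %[mod n])%N) A i j = 1) /\
  (forall k : 'I_n,
      \sum_(i < n) \sum_(j < n | (i == j + k %[mod n])%N) A i j = 1).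

Definition convex_comb_panstoch_perm (R : realType) (n : nat) (A : 'M[R]_n)
  : Prop :=
  exists c : 'S_n -> R,
    (forall s, 0 <= c s) /\
    (\sum_(s : 'S_n) c s = 1) /\
    (forall s, c s != 0 -> panstochastic (perm_mx s : 'M[R]_n)) /\
    A = \sum_(s : 'S_n) c s *: (perm_mx s : 'M[R]_n).

(* Main.v *)
Require Import Defs.
From mathcomp Require Import all_boot all_order all_fingroup all_algebra.
From mathcomp Require Import reals.
From mathcomp Require Import ring lra zify.
Set Implicit Arguments. Unset Strict Implicit. Unset Printing Implicit Defensive.
Import Order.TTheory GRing.Theory Num.Theory.
Local Open Scope ring_scope.

Lemma eqZ n (hn : (1 < n)%N) (a b : nat) :
  ((a%:R : 'Z_n) == b%:R) = (a == b %[mod n])%N.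
Proof.
apply/eqP/eqP => [H|H].
  by have := congr1 val H; rewrite /= !val_Zp_nat.
by apply: val_inj; rewrite /= !val_Zp_nat.
Qed.

Lemma iota_inj n (hn : (1 < n)%N) (i j : 'I_n) :
  ((i : nat)%:R : 'Z_n) = (j : nat)%:R -> i = j.
Proof.
move/eqP; rewrite eqZ // !modn_small // => /eqP H; exact: val_inj.
Qed.

Lemma sum_Zn n (hn : (1 < n)%N) (V : nmodType) (F : 'Z_n -> V) :
  \sum_(i < n) F ((i : nat)%:R) = \sum_(x : 'Z_n) F x.
Proof.
have -> : \sum_(x : 'Z_n) F x = \sum_(x : 'Z_n) F ((x : nat)%:R).
  by apply: eq_bigr => x _; rewrite natr_Zp.
rewrite -!(big_mkord xpredT (fun i => F i%:R)).
have H : forall m', m' = (Zp_trunc n).+2 ->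
   \sum_(0 <= i < m') F (i%:R) = \sum_(0 <= i < (Zp_trunc n).+2) F (i%:R) by move=> ? ->.
by apply: H; rewrite Zp_cast.
Qed.

Lemma sum_unit n (V : nmodType) (u : 'Z_n) (F : 'Z_n -> V) :
  u \is a GRing.unit -> \sum_(x : 'Z_n) F (u * x) = \sum_(x : 'Z_n) F x.
Proof.
move=> hu; rewrite [RHS](reindex_inj (mulrI hu)) //.
Qed.

Lemma sum_pred1_nat (R : nzRingType) (I : finType) (P : pred I) (a : I) :
  \sum_(j | P j) ((a == j)%:R : R) = (P a)%:R.
Proof.
rewrite big_mkcond /= (bigD1 a) //= big1; last first.
  by move=> j /negbTE; rewrite eq_sym => ->; case: (P j).
by rewrite eqxx addr0; case: (P a).
Qed.

Lemma sum_bool_card (R : nzRingType) (I : finType) (b : pred I) :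
  \sum_i ((b i)%:R : R) = (#|b|)%:R.
Proof.
rewrite -sum1_card natr_sum [RHS]big_mkcond /=.
apply: eq_bigr => i _; rewrite -[i \in b]/(b i); by case: (b i).
Qed.

Lemma perm_line (R : realType) n (s : 'S_n) (P : 'I_n -> 'I_n -> bool) :
  \sum_(i < n) \sum_(j < n | P i j) (perm_mx s : 'M[R]_n) i j =
  (#|[pred i | P i (s i)]|)%:R.
Proof.
rewrite -sum_bool_card; apply: eq_bigr => i _.
rewrite -(sum_pred1_nat R (P i) (s i)); apply: eq_bigr => j _.
by rewrite !mxE.
Qed.


Lemma card1_inj (T : finType) (g : T -> T) :
  (forall k, #|[pred i | g i == k]| = 1%N) -> injective g.
Proof.
move=> H i j gij; move: (H (g i)) => /eqP; rewrite eqn_leq => /andP[/card_le1_eqP h _].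
by apply: h; rewrite inE ?gij.
Qed.

Definition gd n (hn : (1 < n)%N) (s : 'S_n) (i : 'I_n) : 'I_n :=
  Ordinal (ltn_pmod (i + s i) (ltnW hn)).
Definition ga n (hn : (1 < n)%N) (s : 'S_n) (i : 'I_n) : 'I_n :=
  Ordinal (ltn_pmod (i + (n - s i)) (ltnW hn)).

Lemma gdE n (hn : (1 < n)%N) (s : 'S_n) (i k : 'I_n) :
  (i + s i == k %[mod n])%N = (gd hn s i == k).
Proof. by rewrite -val_eqE /= (modn_small (ltn_ord k)). Qed.

Lemma gaE n (hn : (1 < n)%N) (s : 'S_n) (i k : 'I_n) :
  (i == s i + k %[mod n])%N = (ga hn s i == k).
Proof.
rewrite -val_eqE /= -(eqn_modDr (n - s i)) addnAC subnKC ?(ltnW (ltn_ord _)) //.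
by rewrite modnDl (modn_small (ltn_ord k)).
Qed.

Definition io n (i : 'I_n) : 'Z_n := (i : nat)%:R.

Lemma io_gd n (hn : (1 < n)%N) (s : 'S_n) (i : 'I_n) : io (gd hn s i) = io i + io (s i).
Proof. by rewrite /io /= Zp_nat_mod // natrD. Qed.

Lemma io_ga n (hn : (1 < n)%N) (s : 'S_n) (i : 'I_n) : io (ga hn s i) = io i - io (s i).
Proof.
rewrite /io /= Zp_nat_mod // natrD natrB ?(ltnW (ltn_ord _)) //.
by rewrite pchar_Zp // sub0r.
Qed.

Lemma queen_facts (R : realType) n (hn : (1 < n)%N) (s : 'S_n) :
  panstochastic (perm_mx s : 'M[R]_n) ->
  injective (gd hn s) /\ injective (ga hn s).
Proof.
move=> [_ [hd ha]]; split; apply: card1_inj => k.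
  have := hd k; rewrite perm_line => /eqP; rewrite pnatr_eq1 => /eqP <-.
  by apply: eq_card => i; rewrite !inE gdE.
have := ha k; rewrite perm_line => /eqP; rewrite pnatr_eq1 => /eqP <-.
by apply: eq_card => i; rewrite !inE gaE.
Qed.

Lemma sum_reindex n (hn : (1 < n)%N) (V : nmodType) (g : 'I_n -> 'I_n) (F : 'Z_n -> V) :
  injective g -> \sum_(i < n) F (io (g i)) = \sum_(x : 'Z_n) F x.
Proof.
move=> ig; rewrite -(reindex_inj (P := xpredT) (F := fun i => F (io i)) ig) /=.
exact: sum_Zn.
Qed.

Lemma sum_queen n (hn : (1 < n)%N) (R : realType) (s : 'S_n) (V : nmodType) (F : 'Z_n -> V) :
  panstochastic (perm_mx s : 'M[R]_n) ->
  [/\ \sum_(i < n) F (io (s i)) = \sum_(x : 'Z_n) F x,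
      \sum_(i < n) F (io i + io (s i)) = \sum_(x : 'Z_n) F x &
      \sum_(i < n) F (io i - io (s i)) = \sum_(x : 'Z_n) F x].
Proof.
move=> /(queen_facts hn) [id ia]; split.
- exact: (sum_reindex hn F (@perm_inj _ s)).
- rewrite -(sum_reindex hn F id); apply: eq_bigr => i _; by rewrite io_gd.
- rewrite -(sum_reindex hn F ia); apply: eq_bigr => i _; by rewrite io_ga.
Qed.


Lemma Zn0 n (hn : (1 < n)%N) (a : nat) : ((a%:R : 'Z_n) = 0) -> (n %| a)%N.
Proof.
move=> H0; have : (a == 0 %[mod n])%N by rewrite -eqZ // H0 eq_sym mulr0n.
rewrite mod0n => /eqP H.
by apply/dvdnP; exists (a %/ n)%N; rewrite {1}(divn_eq a n) H addn0.
Qed.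

Lemma sum_io n (hn : (1 < n)%N) (m : nat) :
  \sum_(x : 'Z_n) x ^+ m = (\sum_(i < n) (i : nat) ^ m)%N%:R.
Proof.
rewrite -(sum_Zn hn (fun x => x ^+ m)) natr_sum.
by apply: eq_bigr => i _; rewrite natrX.
Qed.

Lemma sum_lin (n : nat) : ((\sum_(i < n) i) * 2 = n * n.-1)%N.
Proof.
elim: n => [|n IH]; first by rewrite big_ord0.
rewrite big_ord_recr /= mulnDl IH; case: n {IH} => [|n] //=; lia.
Qed.

Lemma sum_sq (n : nat) : ((\sum_(i < n) i ^ 2) * 6 = n.-1 * n * (2 * n).-1)%N.
Proof.
elim: n => [|n IH]; first by rewrite big_ord0.
rewrite big_ord_recr /= mulnDl IH; case: n {IH} => [|n] //=; nia.
Qed.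

Lemma no_queen (R : realType) n (hn : (1 < n)%N) (s : 'S_n) :
  (2 %| n)%N || (3 %| n)%N -> ~ panstochastic (perm_mx s : 'M[R]_n).
Proof.
move=> h23 hp.
have Q1 := sum_queen hn (fun x : 'Z_n => x) hp.
have Q2 := sum_queen hn (fun x : 'Z_n => x ^+ 2) hp.
case: Q1 => [c1 d1 _]; case: Q2 => [c2 d2 a2].
have S1 : \sum_(x : 'Z_n) x = 0.
  move: d1; rewrite big_split /= c1 -(sum_Zn hn (fun x => x)).
  by move/eqP; rewrite -subr_eq0 addrK => /eqP.
have S2 : 2 * \sum_(x : 'Z_n) x ^+ 2 = 0.
  have : \sum_(i < n) ((io i + io (s i)) ^+ 2 + (io i - io (s i)) ^+ 2)
         = \sum_(i < n) (2 * (io i) ^+ 2 + 2 * (io (s i)) ^+ 2).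
    by apply: eq_bigr => i _; ring.
  have e : \sum_(i < n) io i ^+ 2 = \sum_(x : 'Z_n) x ^+ 2 := sum_Zn hn (fun x => x ^+ 2).
  rewrite !big_split /= d2 a2 -!mulr_sumr c2 e.
  set T := \sum_(x : 'Z_n) x ^+ 2 => H.
  transitivity (- (T + T - (2 * T + 2 * T))); first ring.
  by rewrite H subrr oppr0.
have D1 : (n %| \sum_(i < n) i)%N.
  apply: (Zn0 hn); rewrite -S1 -(sum_io hn 1); apply: eq_bigr => x _; by rewrite expr1.
have D2 : (n %| 2 * \sum_(i < n) i ^ 2)%N.
  by apply: (Zn0 hn); rewrite natrM -S2 sum_io.
have L1 := sum_lin n; have L2 := sum_sq n.
case/orP: h23 => h.
- move: D1 => /dvdnP [q hq]; rewrite hq in L1.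
  have : (q * 2 = n.-1)%N.
    apply/eqP; rewrite -(eqn_pmul2l (ltnW hn)); apply/eqP; rewrite -L1; ring.
  lia.
- move: D2 => /dvdnP [q hq].
  have : (q * 3 = n.-1 * (2 * n).-1)%N.
    apply/eqP; rewrite -(eqn_pmul2l (ltnW hn)); apply/eqP.
    have -> : (n * (q * 3) = (q * n) * 3)%N by ring.
    rewrite -hq; lia.
  move=> E.
  have : (3 %| n.-1 * (2 * n).-1)%N by rewrite -E dvdn_mull.
  rewrite Euclid_dvdM //; lia.
Qed.


Lemma io_eqE n (hn : (1 < n)%N) (i j : 'I_n) : (io i == io j) = (i == j).
Proof.
apply/eqP/eqP => [|->] //; exact: iota_inj.
Qed.

Lemma diagE n (hn : (1 < n)%N) (i j k : 'I_n) :
  (i + j == k %[mod n])%N = (io i + io j == io k).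
Proof. by rewrite /io -natrD eqZ. Qed.

Lemma antiE n (hn : (1 < n)%N) (i j k : 'I_n) :
  (i == j + k %[mod n])%N = (io i == io j + io k).
Proof. by rewrite /io -natrD eqZ. Qed.

Lemma io_ord n (hn : (1 < n)%N) (x : 'Z_n) : exists j : 'I_n, io j = x.
Proof.
have hx : (x < n)%N by have := ltn_ord x; rewrite [X in (_ < X)%N -> _]Zp_cast.
by exists (Ordinal hx); rewrite /io /= natr_Zp.
Qed.

Lemma count_io n (hn : (1 < n)%N) (x : 'Z_n) : #|[pred j : 'I_n | io j == x]| = 1%N.
Proof.
apply/eqP/card1P; have [j0 hj0] := io_ord hn x; exists j0 => j.
by rewrite !inE -hj0 io_eqE.
Qed.

Lemma sum_Zn_cond n (hn : (1 < n)%N) (V : nmodType) (P : pred 'Z_n) (F : 'Z_n -> V) :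
  \sum_(i < n | P (io i)) F (io i) = \sum_(x : 'Z_n | P x) F x.
Proof.
rewrite big_mkcond [RHS]big_mkcond /=.
exact: (sum_Zn hn (fun x => if P x then F x else 0)).
Qed.

Definition Jn (R : realType) n : 'M[R]_n := \matrix_(i, j) (n%:R)^-1.

Lemma Jn_pan (R : realType) n (hn : (1 < n)%N) : panstochastic (Jn R n).
Proof.
have nz : (n%:R : R) != 0 by rewrite pnatr_eq0 -lt0n ltnW.
have cst : forall (P : pred 'I_n), #|P| = 1%N -> \sum_(j < n | P j) (n%:R : R)^-1 = (n%:R)^-1.
  by move=> P hP; rewrite sumr_const hP.
have tot : \sum_(i < n) (n%:R : R)^-1 = 1.
  by rewrite sumr_const card_ord -[LHS]mulr_natr mulVf.
split; [split; [|split]|split].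
- by move=> i j; rewrite mxE invr_ge0 ler0n.
- by move=> i; rewrite -tot; apply: eq_bigr => j _; rewrite mxE.
- by move=> j; rewrite -tot; apply: eq_bigr => i _; rewrite mxE.
- move=> k; rewrite -tot; apply: eq_bigr => i _.
  rewrite (eq_bigr (fun _ => (n%:R : R)^-1)); last by move=> j _; rewrite !mxE.
  rewrite cst // -(count_io hn (io k - io i)); apply: eq_card => j.
  by rewrite !inE unfold_in diagE //; apply/eqP/eqP => h; [rewrite -h | rewrite h]; ring.
- move=> k; rewrite -tot; apply: eq_bigr => i _.
  rewrite (eq_bigr (fun _ => (n%:R : R)^-1)); last by move=> j _; rewrite !mxE.
  rewrite cst // -(count_io hn (io i - io k)); apply: eq_card => j.
  by rewrite !inE unfold_in antiE //; apply/eqP/eqP => h; [rewrite h | rewrite h]; ring.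
Qed.

Lemma exists_nz (R : realType) n (c : 'S_n -> R) :
  \sum_(s : 'S_n) c s = 1 -> exists s, c s != 0.
Proof.
move=> h; case: (pickP (fun s => c s != 0)) => [s hs|h0]; first by exists s.
move: h; rewrite big1 => [/eqP|s _]; first by rewrite eq_sym oner_eq0.
by have := h0 s => /negbFE/eqP.
Qed.

Lemma case23 (R : realType) n (hn : (1 < n)%N) :
  (2 %| n)%N || (3 %| n)%N ->
  exists A : 'M[R]_n, panstochastic A /\ ~ convex_comb_panstoch_perm A.
Proof.
move=> h23; exists (Jn R n); split; first exact: Jn_pan.
move=> [c [_ [c1 [cp _]]]].
have [s hs] := exists_nz c1.
exact: (no_queen hn h23 (cp s hs)).
Qed.


Lemma sum_and_eq (R : nzRingType) (T : finType) (P : pred T) (b : bool) (v : T) :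
  \sum_(y | P y) ((b && (y == v))%:R : R) = (b && P v)%:R.
Proof.
rewrite big_mkcond (bigD1 v) //= eqxx andbT big1 ?addr0; first by case: (P v); case: b.
by move=> y /negbTE ->; rewrite andbF; case: (P y).
Qed.

Lemma sum_nz (R : nzRingType) n (hn : (1 < n)%N) (b : bool) :
  \sum_(y : 'Z_n) ((b && (y != 0))%:R : R) = b%:R * (n.-1)%:R.
Proof.
case: b; last by rewrite mul0r big1 // => y _; rewrite /= mulr0n.
rewrite mul1r sum_bool_card; congr (_%:R).
rewrite (cardC1 (0 : 'Z_n)) card_ord Zp_cast //.
Qed.

Definition cnt (R : nzRingType) n (u k : 'Z_n) : R :=
  \sum_(x : 'Z_n) (((x != 0) && (u * x == k))%:R).

Lemma sum_and_eq2 (R : nzRingType) (T : finType) (b : pred T) (v : T) :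
  \sum_y ((b y && (y == v))%:R : R) = (b v)%:R.
Proof.
rewrite (bigD1 v) //= eqxx andbT big1 ?addr0 //.
by move=> y /negbTE ->; rewrite andbF.
Qed.

Lemma cnt_unit (R : nzRingType) n (u k : 'Z_n) :
  u \is a GRing.unit -> cnt R u k = (k != 0)%:R.
Proof.
move=> hu; rewrite /cnt.
pose G := fun z : 'Z_n => (((u^-1 * z != 0) && (z == k))%:R : R).
transitivity (\sum_(x : 'Z_n) G (u * x)).
  by apply: eq_bigr => x _; rewrite /G mulKr.
rewrite (sum_unit G hu) /G (sum_and_eq2 _ (fun z => u^-1 * z != 0)); congr (_%:R).
congr (~~ _); apply/eqP/eqP => h.
  by rewrite -(mulVKr hu k) h mulr0.
by rewrite h mulr0.
Qed.

Lemma cnt_zero (R : nzRingType) n (hn : (1 < n)%N) (k : 'Z_n) :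
  cnt R 0 k = (k == 0)%:R * (n.-1)%:R.
Proof.
rewrite /cnt -(sum_nz R hn (k == 0)); apply: eq_bigr => x _.
by rewrite mul0r [0 == k]eq_sym andbC.
Qed.

Definition T (R : nzRingType) n (c x y : 'Z_n) : R := ((x != 0) && (y == c * x))%:R.
Definition TI (R : nzRingType) n (x y : 'Z_n) : R := ((x == 0) && (y != 0))%:R.

Lemma rowT (R : nzRingType) n (c k : 'Z_n) : \sum_y T R c k y = (k != 0)%:R.
Proof. by rewrite /T (sum_and_eq _ xpredT) andbT. Qed.

Lemma rowI (R : nzRingType) n (hn : (1 < n)%N) (k : 'Z_n) :
  \sum_y TI R k y = (k == 0)%:R * (n.-1)%:R.
Proof. exact: sum_nz. Qed.

Lemma colT (R : nzRingType) n (c k : 'Z_n) : \sum_x T R c x k = cnt R c k.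
Proof. by apply: eq_bigr => x _; rewrite /T [k == _]eq_sym. Qed.

Lemma colI (R : nzRingType) n (k : 'Z_n) : \sum_x TI R x k = (k != 0)%:R.
Proof.
rewrite /TI (eq_bigr (fun x => (((k != 0) && (x == 0))%:R : R))).
  by rewrite (sum_and_eq2 _ (fun _ => k != 0)).
by move=> x _; rewrite andbC.
Qed.

Lemma diagT (R : nzRingType) n (c k : 'Z_n) :
  \sum_x \sum_(y | x + y == k) T R c x y = cnt R (1 + c) k.
Proof.
apply: eq_bigr => x _; rewrite /T (sum_and_eq _ (fun y => x + y == k)).
by rewrite mulrDl mul1r.
Qed.

Lemma antiT (R : nzRingType) n (c k : 'Z_n) :
  \sum_x \sum_(y | x == y + k) T R c x y = cnt R (1 - c) k.
Proof.
apply: eq_bigr => x _; rewrite /T (sum_and_eq _ (fun y => x == y + k)).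
by rewrite mulrBl mul1r subr_eq addrC.
Qed.

Lemma diagI (R : nzRingType) n (k : 'Z_n) :
  \sum_x \sum_(y | x + y == k) TI R x y = (k != 0)%:R.
Proof.
transitivity (\sum_x ((((k - x) != 0) && (x == 0))%:R : R)); last first.
  by rewrite (sum_and_eq2 _ (fun x => k - x != 0)) subr0.
apply: eq_bigr => x _.
rewrite (eq_bigl (fun y => y == k - x)); last first.
  by move=> y /=; apply/eqP/eqP => h; [rewrite -h | rewrite h]; ring.
by rewrite big_pred1_eq /TI andbC.
Qed.

Lemma antiI (R : nzRingType) n (k : 'Z_n) :
  \sum_x \sum_(y | x == y + k) TI R x y = (k != 0)%:R.
Proof.
transitivity (\sum_x ((((x - k) != 0) && (x == 0))%:R : R)); last first.
  by rewrite (sum_and_eq2 _ (fun x => x - k != 0)) sub0r oppr_eq0.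
apply: eq_bigr => x _.
rewrite (eq_bigl (fun y => y == x - k)); last first.
  by move=> y /=; apply/eqP/eqP => h; [rewrite h | rewrite h]; ring.
by rewrite big_pred1_eq /TI andbC.
Qed.


Definition al (R : realType) n : R := ((n.-1)%:R)^-1.
Definition sa (R : realType) n (x y : 'Z_n) : R :=
  al R n * (TI R x y + T R 0 x y + T R 1 x y + T R (-1) x y) + (1 - 3 * al R n) * T R 2 x y.
Definition star (R : realType) n : 'M[R]_n := \matrix_(i, j) sa R (io i) (io j).

Lemma lin2 (R : realType) n (P : 'Z_n -> 'Z_n -> bool) :
  \sum_x \sum_(y | P x y) sa R x y =
  al R n * (\sum_x \sum_(y | P x y) TI R x y + \sum_x \sum_(y | P x y) T R 0 x y +
            \sum_x \sum_(y | P x y) T R 1 x y + \sum_x \sum_(y | P x y) T R (-1) x y) +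
  (1 - 3 * al R n) * \sum_x \sum_(y | P x y) T R 2 x y.
Proof.
rewrite /sa; under eq_bigr do rewrite big_split /= -!mulr_sumr !big_split /=.
by rewrite big_split /= -!mulr_sumr !big_split.
Qed.

Lemma lin1 (R : realType) n (k : 'Z_n) :
  (\sum_y sa R k y =
  al R n * (\sum_y TI R k y + \sum_y T R 0 k y + \sum_y T R 1 k y + \sum_y T R (-1) k y) +
  (1 - 3 * al R n) * \sum_y T R 2 k y) /\
  (\sum_x sa R x k =
  al R n * (\sum_x TI R x k + \sum_x T R 0 x k + \sum_x T R 1 x k + \sum_x T R (-1) x k) +
  (1 - 3 * al R n) * \sum_x T R 2 x k).
Proof.
by rewrite /sa; split; rewrite big_split /= -!mulr_sumr !big_split.
Qed.

Lemma sum_io_Zn n (hn : (1 < n)%N) (V : nmodType) (F : 'Z_n -> V) :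
  \sum_(i < n) F (io i) = \sum_(x : 'Z_n) F x.
Proof. exact: sum_Zn. Qed.

Lemma conv_row (R : realType) n (hn : (1 < n)%N) (f : 'Z_n -> 'Z_n -> R) (k : 'I_n) :
  \sum_(j < n) (\matrix_(i, j) f (io i) (io j) : 'M[R]_n) k j = \sum_y f (io k) y.
Proof.
rewrite -(sum_io_Zn hn (f (io k))); apply: eq_bigr => j _; by rewrite mxE.
Qed.

Lemma conv_col (R : realType) n (hn : (1 < n)%N) (f : 'Z_n -> 'Z_n -> R) (k : 'I_n) :
  \sum_(i < n) (\matrix_(i, j) f (io i) (io j) : 'M[R]_n) i k = \sum_x f x (io k).
Proof.
rewrite -(sum_io_Zn hn (fun x => f x (io k))); apply: eq_bigr => j _; by rewrite mxE.
Qed.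

Lemma conv_diag (R : realType) n (hn : (1 < n)%N) (f : 'Z_n -> 'Z_n -> R) (k : 'I_n) :
  \sum_(i < n) \sum_(j < n | (i + j == k %[mod n])%N) (\matrix_(i, j) f (io i) (io j) : 'M[R]_n) i j
  = \sum_x \sum_(y | x + y == io k) f x y.
Proof.
rewrite -(sum_io_Zn hn (fun x => \sum_(y | x + y == io k) f x y)); apply: eq_bigr => i _.
rewrite -(sum_Zn_cond hn (fun y => io i + y == io k) (f (io i))).
by apply: eq_big => [j|j _]; [exact: diagE | rewrite mxE].
Qed.

Lemma conv_anti (R : realType) n (hn : (1 < n)%N) (f : 'Z_n -> 'Z_n -> R) (k : 'I_n) :
  \sum_(i < n) \sum_(j < n | (i == j + k %[mod n])%N) (\matrix_(i, j) f (io i) (io j) : 'M[R]_n) i j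
  = \sum_x \sum_(y | x == y + io k) f x y.
Proof.
rewrite -(sum_io_Zn hn (fun x => \sum_(y | x == y + io k) f x y)); apply: eq_bigr => i _.
rewrite -(sum_Zn_cond hn (fun y => io i == y + io k) (f (io i))).
by apply: eq_big => [j|j _]; [exact: antiE | rewrite mxE].
Qed.

Lemma alE (R : realType) n (h4 : (4 <= n)%N) : al R n * (n.-1)%:R = 1.
Proof. by rewrite /al mulVf // pnatr_eq0 -lt0n; lia. Qed.

Lemma star_pan (R : realType) n (hn : (1 < n)%N) (h2 : coprime n 2) (h3 : coprime n 3)
  (h4 : (4 <= n)%N) : panstochastic (star R n).
Proof.
have u2 : (2 : 'Z_n) \is a GRing.unit by rewrite unitZpE.
have u3 : (3 : 'Z_n) \is a GRing.unit by rewrite unitZpE.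
have u1 : (1 : 'Z_n) \is a GRing.unit by exact: unitr1.
have um1 : (-1 : 'Z_n) \is a GRing.unit by rewrite unitrN.
have a1 := alE R h4.
have al0 : 0 <= al R n by rewrite /al invr_ge0 ler0n.
have w0 : 0 <= 1 - 3 * al R n.
  rewrite subr_ge0 /al ler_pdivrMr ?ltr0n; [rewrite mul1r ler_nat; lia | lia].
have fin : forall (k : 'Z_n) (X S : R), X = (k == 0)%:R * (n.-1)%:R ->
    S = X + (k != 0)%:R + (k != 0)%:R + (k != 0)%:R ->
    al R n * S + (1 - 3 * al R n) * (k != 0)%:R = 1.
  move=> k X S -> ->; case: (k == 0) => /=; rewrite ?mul1r ?mul0r.
    by rewrite !addr0 mulr0 addr0 a1.
  by ring.
have e11 : (1 + 1 : 'Z_n) = 2 by ring.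
have e12 : (1 + 2 : 'Z_n) = 3 by ring.
have e1m : (1 - -1 : 'Z_n) = 2 by ring.
have e1m2 : (1 - 2 : 'Z_n) = -1 by ring.
rewrite /star; split; [split; [|split]|split].
- move=> i j; rewrite mxE /sa /T /TI; apply: addr_ge0; apply: mulr_ge0 => //.
  by rewrite !addr_ge0 ?ler0n.
- move=> i; rewrite conv_row // (lin1 R (io i)).1 rowI // !rowT.
  exact: (fin (io i) _ _ erefl erefl).
- move=> j; rewrite conv_col // (lin1 R (io j)).2 colI !colT cnt_zero // !cnt_unit //.
  by apply: (fin (io j) _ _ erefl); ring.
- move=> k; rewrite conv_diag // lin2 diagI !diagT addr0 subrr e11 e12 cnt_zero // !cnt_unit //.
  by apply: (fin (io k) _ _ erefl); ring.
- move=> k; rewrite conv_anti // lin2 antiI !antiT subr0 subrr e1m e1m2 cnt_zero // !cnt_unit //.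
  by apply: (fin (io k) _ _ erefl); ring.
Qed.


Lemma unit_cancel (R : comUnitRingType) (u a : R) : u \is a GRing.unit -> u * a = 0 -> a = 0.
Proof. by move=> hu h; apply: (mulrI hu); rewrite h mulr0. Qed.

Lemma lin_comb (R : comUnitRingType) (e1 e2 e3 a b c P : R) :
  e1 = 0 -> e2 = 0 -> e3 = 0 -> P = a * e1 + b * e2 + c * e3 -> P = 0.
Proof. by move=> -> -> -> ->; rewrite !mulr0 !addr0. Qed.
Arguments lin_comb {R e1 e2 e3} a b c {P}.

Lemma alg5 (R : comUnitRingType) (X Y Z : R) :
  (2 : R) \is a GRing.unit -> (3 : R) \is a GRing.unit ->
  (forall F : R -> R,
     [/\ (F 1 - F (2 * 0)) + (F 0 - F (2 * X)) + (F Y - F (2 * Y)) + (F (- Z) - F (2 * Z)) = 0,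
         (F (0 + 1) - F (3 * 0)) + (F (X + 0) - F (3 * X)) + (F (Y + Y) - F (3 * Y))
           + (F (Z + - Z) - F (3 * Z)) = 0 &
         (F (0 - 1) - F (- 0)) + (F (X - 0) - F (- X)) + (F (Y - Y) - F (- Y))
           + (F (Z - - Z) - F (- Z)) = 0]) ->
  (5 : R) = 0.
Proof.
move=> u2 u3 H.
have u6 : (6 : R) \is a GRing.unit by rewrite (_ : 6 = 2 * 3); [rewrite unitrM u2 u3 | ring].
have [c1 _ _] := H (fun t => t).
have [c2 _ a2] := H (fun t => t ^+ 2).
have [c3 d3 a3] := H (fun t => t ^+ 3).
cbv beta in c1, c2, a2, c3, d3, a3.
have z0 : (0 : R) = 0 by [].
have L : Y = 1 - 2 * X - 3 * Z.
  apply/eqP; rewrite -subr_eq0; apply/eqP.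
  by apply: (lin_comb (-1) 0 0 c1 z0 z0); ring.
have Z3 : 6 * Z ^+ 3 - 1 = 0.
  apply: (unit_cancel u6); by apply: (lin_comb (-2) 1 5 c3 d3 a3); ring.
have X3 : 2 * X ^+ 3 + 1 = 0.
  apply: (unit_cancel u6); by apply: (lin_comb 8 (-3) (-1) c3 d3 a3); ring.
have R1 : 2 * X ^+ 2 + 6 * Z ^+ 2 + 1 = 0.
  apply: (unit_cancel u2); by apply: (lin_comb (-1) 3 0 c2 a2 z0); ring.
have E6 : 1 + 3 * Z ^+ 2 + 2 * X + 3 * Z - 6 * X * Z = 0.
  apply: (unit_cancel u2); apply: (lin_comb 1 2 0 a2 R1 z0); rewrite L; ring.
have R2 : X + 6 * X * Z ^+ 2 - 1 = 0.
  by apply: (lin_comb X (-1) 0 R1 X3 z0); ring.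
have R3 : 3 * Z ^+ 2 + 2 = 0.
  apply: (unit_cancel u3).
  by apply: (lin_comb (1 + 6 * Z ^+ 2) (- 2 * (1 - 3 * Z)) (- (3 + 3 * Z)) E6 R2 Z3); ring.
have R4 : 4 * Z + 1 = 0.
  by apply: (lin_comb (2 * Z) (-1) 0 R3 Z3 z0); ring.
have R5 : 3 * X + 1 = 0.
  by apply: (lin_comb (-1) (2 * X) 0 R2 R3 z0); ring.
have N35 : (35 : R) = 0.
  by apply: (lin_comb 16 (- 3 * (4 * Z + 1) + 6) 0 R3 R4 z0); ring.
have N25 : (25 : R) = 0.
  by apply: (lin_comb 27 (- 2 * ((3 * X + 1) ^+ 2 - 3 * (3 * X + 1) + 3)) 0 X3 R5 z0); ring.
by apply: (lin_comb 3 (-4) 0 N35 N25 z0); ring.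
Qed.


Lemma sum4 (V : zmodType) (T : finType) (h : T -> V) (a b c d : T) :
  uniq [:: a; b; c; d] -> (forall i, i \notin [:: a; b; c; d] -> h i = 0) ->
  \sum_i h i = h a + h b + h c + h d.
Proof.
move=> u H; rewrite (bigID (fun i => i \in [:: a; b; c; d])) /= [X in _ + X]big1; last first.
  by move=> i /H.
by rewrite addr0 -big_uniq // !big_cons big_nil /= addr0 !addrA.
Qed.

Lemma sa_supp (R : realType) n (x y : 'Z_n) : sa R x y != 0 ->
  [|| (x == 0) && (y != 0), (x != 0) && (y == 0 * x), (x != 0) && (y == 1 * x),
      (x != 0) && (y == -1 * x) | (x != 0) && (y == 2 * x)].
Proof.
move=> h; apply/negPn/negP => hn; move: h; rewrite /sa /T /TI.
move: hn; rewrite !negb_or => /and5P [/negbTE -> /negbTE -> /negbTE -> /negbTE -> /negbTE ->].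
by rewrite /= !addr0 !mulr0 addr0 eqxx.
Qed.

Lemma star_nh (R : realType) n (hn : (1 < n)%N) (h2 : ~~ (2 %| n)%N) (h3 : ~~ (3 %| n)%N)
  (h5 : n <> 5%N) : ~ convex_comb_panstoch_perm (star R n).
Proof.
have h4 : (4 <= n)%N by lia.
have c2 : coprime n 2 by rewrite coprime_sym prime_coprime.
have c3 : coprime n 3 by rewrite coprime_sym prime_coprime.
have u2 : (2 : 'Z_n) \is a GRing.unit by rewrite unitZpE.
have u3 : (3 : 'Z_n) \is a GRing.unit by rewrite unitZpE.
have um1 : (-1 : 'Z_n) \is a GRing.unit by rewrite unitrN unitr1.
move=> [c [c0 [c1 [cp hA]]]].
pose o0 : 'I_n := Ordinal (ltnW hn).
pose o1 : 'I_n := Ordinal hn.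
have io0 : io o0 = 0 by rewrite /io; exact: mulr0n.
have io1 : io o1 = 1 by rewrite /io; exact: mulr1n.
have n10 : (1 : 'Z_n) != 0 := oner_neq0 _.
have ioI : forall i j : 'I_n, io i = io j -> i = j := iota_inj hn.
have hE : forall i j, star R n i j = \sum_t c t * (t i == j)%:R.
  by move=> i j; rewrite hA summxE; apply: eq_bigr => t _; rewrite !mxE.
have al_pos : 0 < al R n by rewrite /al invr_gt0 ltr0n; lia.
have e01 : star R n o0 o1 = al R n.
  rewrite /star mxE io0 io1 /sa /T /TI eqxx (negbTE n10) /=.
  by rewrite !addr0 mulr0 addr0 mulr1.
have [s [hs1 hs2]] : exists s, c s != 0 /\ s o0 = o1.
  case: (pickP (fun t => (c t != 0) && (t o0 == o1))) => [t /andP[ht1 /eqP ht2] | hnone]; first by exists t.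
  exfalso; move: e01; rewrite hE big1 => [h|t _]; first by move: al_pos; rewrite -h ltxx.
  have := hnone t; case: (c t =P 0) => [-> _|_ /=]; first by rewrite mul0r.
  by move/negbT/negbTE => ->; rewrite mulr0.
have cs_pos : 0 < c s by rewrite lt0r hs1 c0.
have supp : forall i, sa R (io i) (io (s i)) != 0.
  move=> i; have := hE i (s i); rewrite /star mxE => ->.
  rewrite (bigD1 s) //= eqxx mulr1.
  have : 0 <= \sum_(t | t != s) c t * (t i == s i)%:R.
    by apply: sumr_ge0 => t _; rewrite mulr_ge0 ?ler0n.
  move=> h; apply/negP => /eqP; move: h; move: (\sum_(t | t != s) c t * (t i == s i)%:R) => S h h0; have hh : c s <= c s + S by rewrite lerDl.
  by have := lt_le_trans cs_pos hh; rewrite h0 ltxx.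
have hp := cp s hs1.
have [igd iga] := queen_facts hn hp.
have [gia _ gaK] := injF_bij iga.
have [gid _ gdK] := injF_bij igd.
pose i0 := (s^-1)%g o0.
have si0 : s i0 = o0 by rewrite /i0 permKV.
pose i1 := gia o0.
have gi1 : ga hn s i1 = o0 by rewrite /i1 gaK.
pose i2 := gid o0.
have gi2 : gd hn s i2 = o0 by rewrite /i2 gdK.
have S0 : io (s i0) = 0 by rewrite si0 io0.
have So : io (s o0) = 1 by rewrite hs2 io1.
have S1 : io (s i1) = io i1.
  by apply/esym/subr0_eq; rewrite -io_ga gi1 io0.
have S2 : io (s i2) = - io i2.
  by apply/eqP; rewrite -addr_eq0 addrC -io_gd gi2 io0.
have ioinj0 : forall i, io i = 0 -> i = o0.
  by move=> i h; apply: ioI; rewrite h io0.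
have X0 : io i0 != 0.
  by apply/eqP => /ioinj0 e; move: S0; rewrite e So; apply/eqP.
have X1 : io i1 != 0.
  by apply/eqP => /ioinj0 e; move: S1; rewrite e So io0; apply/eqP.
have X2 : io i2 != 0.
  by apply/eqP => /ioinj0 e; move: S2; rewrite e So io0 oppr0; apply/eqP.
have ne : forall i j : 'I_n, io i != io j -> i != j.
  by move=> i j; apply: contra => /eqP ->.
have d01 : o0 != i0 by apply: ne; rewrite io0 eq_sym.
have d02 : o0 != i1 by apply: ne; rewrite io0 eq_sym.
have d03 : o0 != i2 by apply: ne; rewrite io0 eq_sym.
have d12 : i0 != i1.
  by apply/eqP => e; move: S1; rewrite -e S0 => /esym/eqP; rewrite (negbTE X0).
have d13 : i0 != i2.
  apply/eqP => e; move: S2; rewrite -e S0 => /eqP; rewrite eq_sym oppr_eq0.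
  by rewrite (negbTE X0).
have d23 : i1 != i2.
  apply/eqP => e; move: S2; rewrite -e S1 => h.
  have : 2 * io i1 = 0 by rewrite mulr2n mulrDl mul1r {1}h addNr.
  by move/(unit_cancel u2)/eqP; rewrite (negbTE X1).
have U : uniq [:: o0; i0; i1; i2].
  by rewrite /= !inE !negb_or d01 d02 d03 d12 d13 d23.
have oth : forall i, i \notin [:: o0; i0; i1; i2] -> io (s i) = 2 * io i.
  move=> i; rewrite !inE !negb_or => /and4P [ni0 ni1 ni2 ni3].
  have Xi : io i != 0 by apply: contra ni0 => /eqP /ioinj0 ->.
  have := sa_supp (supp i); rewrite (negbTE Xi) /= => /or4P [h|h|h|h].
  - move: h; rewrite mul0r -S0 => /eqP /ioI /perm_inj e.
    by move: ni1; rewrite e eqxx.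
  - move: h; rewrite mul1r => /eqP h.
    have : ga hn s i = ga hn s i1 by apply: ioI; rewrite !io_ga h S1 !subrr.
    by move/iga => e; move: ni2; rewrite e eqxx.
  - move: h; rewrite mulN1r => /eqP h.
    have : gd hn s i = gd hn s i2 by apply: ioI; rewrite !io_gd h S2 !subrr.
    by move/igd => e; move: ni3; rewrite e eqxx.
  - by apply/eqP.
have key : forall F : 'Z_n -> 'Z_n,
     [/\ (F 1 - F (2 * 0)) + (F 0 - F (2 * io i0)) + (F (io i1) - F (2 * io i1))
           + (F (- io i2) - F (2 * io i2)) = 0,
         (F (0 + 1) - F (3 * 0)) + (F (io i0 + 0) - F (3 * io i0))
           + (F (io i1 + io i1) - F (3 * io i1)) + (F (io i2 + - io i2) - F (3 * io i2)) = 0 &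
         (F (0 - 1) - F (- 0)) + (F (io i0 - 0) - F (- io i0))
           + (F (io i1 - io i1) - F (- io i1)) + (F (io i2 - - io i2) - F (- io i2)) = 0].
  move=> F; have [qc qd qa] := sum_queen hn F hp; split.
  - have : \sum_(i < n) (F (io (s i)) - F (2 * io i)) = 0.
      rewrite sumrB qc (sum_io_Zn hn (fun x => F (2 * x))) (@sum_unit _ _ 2 F u2).
      by rewrite subrr.
    rewrite (sum4 U); last by move=> i /oth ->; rewrite subrr.
    by rewrite So io0 S0 S1 S2.
  - have : \sum_(i < n) (F (io i + io (s i)) - F (3 * io i)) = 0.
      rewrite sumrB qd (sum_io_Zn hn (fun x => F (3 * x))) (@sum_unit _ _ 3 F u3).
      by rewrite subrr.
    rewrite (sum4 U); last first.
      move=> i /oth ->; rewrite (_ : io i + 2 * io i = 3 * io i) ?subrr //; ring.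
    by rewrite So io0 S0 S1 S2.
  - have : \sum_(i < n) (F (io i - io (s i)) - F (- io i)) = 0.
      rewrite sumrB qa.
      rewrite (eq_bigr (fun i => F (-1 * io i))); last by move=> i _; rewrite mulN1r.
      rewrite (sum_io_Zn hn (fun x => F (-1 * x))) (@sum_unit _ _ (-1) F um1).
      by rewrite subrr.
    rewrite (sum4 U); last first.
      move=> i /oth ->; rewrite (_ : io i - 2 * io i = - io i) ?subrr //; ring.
    by rewrite So io0 S0 S1 S2.
have h5z := alg5 u2 u3 key.
have := Zn0 hn h5z => /(dvdn_leq (isT : (0 < 5)%N)) => h5n.
clear -h5n h5 h2 h3 hn; lia.
Qed.


Theorem theorem1p2 (R : realType) (n : nat) :
  (1 < n)%N -> n <> 5%N ->
  exists A : 'M[R]_n, panstochastic A /\ ~ convex_comb_panstoch_perm A.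
Proof.
move=> hn h5.
case h23: ((2 %| n)%N || (3 %| n)%N); first exact: case23.
move/negbT: h23; rewrite negb_or => /andP[h2 h3].
exists (star R n); split; last exact: star_nh.
have h4 : (4 <= n)%N by clear -hn h2 h3 h5; lia.
by apply: star_pan => //; rewrite coprime_sym prime_coprime.
Qed.
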